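(* A cograph $G$ has outcome $\mathcal D$ in the Maker-Breaker domination game if and only if $G$ admits a pairing dominating set.
   Context: Cographs are the graphs that can be built from single vertices by repeatedly taking disjoint unions and joins (equivalently, $P_4$-free graphs). Given a graph $G=(V,E)$, a pairing dominating set is a set of pairs of vertices $\{(u_1,v_1),\ldots,(u_k,v_k)\}$, where all $2k$ vertices are distinct, such that $V=\bigcup_{i=1}^k \big(N[u_i]\cap N[v_i]\big)$, with $N[x]$ the closed neighborhood of $x$. The Maker-Breaker domination game on $G$: Dominator and Staller alternately choose a not-yet-chosen vertex (no passing), starting with all vertices unchosen; when all vertices are chosen, Dominator wins if his vertices form a dominating set of $G$, otherwise Staller wins. Outcome $\mathcal D$ means Dominator has a winning strategy both as first and as second player. *)

(* Defs.v *)
(* Finite simple graphs as symmetric irreflexive relations on a finType. *)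
From mathcomp Require Import all_boot.
Set Implicit Arguments. Unset Strict Implicit. Unset Printing Implicit Defensive.

Section Graphs.
Variable V : finType.
Variable e : rel V.

Definition cnbh (x : V) : {set V} := x |: [set y | e x y].

Definition cograph : Prop :=
  forall a b c d : V,
    e a b -> e b c -> e c d -> ~~ e a c -> ~~ e b d -> ~~ e a d -> False.

Definition dominating (D : {set V}) : bool :=
  [forall x, [exists y in D, x \in cnbh y]].

Definition pairing_dominating_set (P : seq (V * V)) : Prop :=
  uniq (flatten [seq [:: p.1; p.2] | p <- P]) /\
  forall x : V, exists2 p, p \in P & (x \in cnbh p.1) && (x \in cnbh p.2).

Definition admits_pairing_dominating_set : Prop :=
  exists P : seq (V * V), pairing_dominating_set P.

(* A position is (D, S): vertices chosen by
   Dominator and by Staller; the boolean says whether Dominator is to move.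
   DomWins D S t : Dominator has a winning strategy from this position
   (least fixed point = winning in finitely many moves; the game is finite). *)
Inductive DomWins : {set V} -> {set V} -> bool -> Prop :=
  | DW_end D S t :
      D :|: S = setT -> dominating D -> DomWins D S t
  | DW_dom D S v :
      v \notin D :|: S -> DomWins (v |: D) S false -> DomWins D S true
  | DW_stall D S :
      D :|: S != setT ->
      (forall v, v \notin D :|: S -> DomWins D (v |: S) true) ->
      DomWins D S false.

Definition outcome_D : Prop :=
  DomWins set0 set0 true /\ DomWins set0 set0 false.

End Graphs.

(* Main.v *)
Require Import Defs.
From mathcomp Require Import all_boot.
Set Implicit Arguments. Unset Strict Implicit. Unset Printing Implicit Defensive.

Section Decomp.
Variable V : finType.

Definition splitQ (r : rel V) (X : {set V}) :=
  exists A B : {set V}, [/\ A :|: B = X, [disjoint A & B], A != set0, B != set0 &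
    (forall a b, a \in A -> b \in B -> ~~ r a b) \/ (forall a b, a \in A -> b \in B -> r a b)].

Definition crel (r : rel V) : rel V := fun a b => (a != b) && ~~ r a b.

Lemma crel_sym r : symmetric r -> symmetric (crel r).
Proof. by move=> sr a b; rewrite /crel eq_sym sr. Qed.

Lemma crel_irr r : irreflexive (crel r).
Proof. by move=> a; rewrite /crel eqxx. Qed.

Lemma crel_P4 r : symmetric r -> cograph r -> cograph (crel r).
Proof.
move=> sr P4 a b c d H1 H2 H3 H4 H5 H6.
have sc := crel_sym sr.
case: (a =P c) => [eac|/eqP nac]; first by subst c; rewrite H3 in H6.
case: (b =P d) => [ebd|/eqP nbd]; first by subst d; rewrite H1 in H6.
case: (a =P d) => [ead|/eqP nad]; first by subst d; rewrite sc H3 in H4.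
move: H1 H2 H3 H4 H5 H6; rewrite /crel nac nbd nad /= !negbK.
move=> /andP [_ rab] /andP [_ rbc] /andP [_ rcd] rac rbd rad.
apply: (P4 c a d b) => //; by rewrite sr.
Qed.

Lemma disj_neq (A B : {set V}) a b : [disjoint A & B] -> a \in A -> b \in B -> a != b.
Proof.
move=> dAB aA bB; apply/eqP=> eab; subst b.
by move/disjoint_setI0: dAB => /setP /(_ a); rewrite inE aA bB in_set0.
Qed.

Lemma splitQ_crel r X : splitQ (crel r) X -> splitQ r X.
Proof.
case=> A [B [uAB dAB nA nB H]]; exists A, B; split=> //.
case: H=> H; [right|left] => a b aA bB; have := H a b aA bB;
  rewrite /crel (disj_neq dAB aA bB) /=; first by rewrite negbK.
by [].
Qed.

Lemma core2 (r : rel V) (v : V) (X A B : {set V}) (y z : V) : symmetric r -> cograph r -> v \in X ->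
  A :|: B = X :\ v -> [disjoint A & B] ->
  (forall a b, a \in A -> b \in B -> ~~ r a b) ->
  y \in A -> ~~ r v y -> z \in B -> r v z -> splitQ r X.
Proof.
move=> sr P4 vX uAB dAB ne yA nvy zB rvz.
pose M := [set m in A | ~~ r v m].
have AX : A \subset X.
  apply/subsetP=> a aA; have : a \in X :\ v by rewrite -uAB inE aA.
  by rewrite inE => /andP [].
case: (boolP [exists m in M, exists a in A, r v a && r a m]).
  case/existsP=> m /andP [mM /existsP [a /andP [aA /andP [rva ram]]]].
  move: mM; rewrite inE => /andP [mA nvm].
  exfalso; apply: (P4 m a v z) => //; first by rewrite sr.
  - by rewrite sr.
  - by rewrite sr.
  - exact: ne aA zB.
  - exact: ne mA zB.
move=> nE.
have vA : v \notin A.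
  apply/negP=> vA; have : v \in X :\ v by rewrite -uAB inE vA.
  by rewrite !inE eqxx.
exists M, (X :\: M); split.
- have MX : M \subset X.
    by apply/subsetP=> x; rewrite inE => /andP [xA _]; apply: (subsetP AX).
  by rewrite -{2}(setID X M) (setIidPr MX).
- by rewrite -setI_eq0 setDE setICA setICr setI0.
- by apply/set0Pn; exists y; rewrite inE yA.
- by apply/set0Pn; exists v; rewrite !inE vX (negbTE vA).
- left=> m x mM; rewrite inE => /andP [xnM xX].
  move: (mM); rewrite inE => /andP [mA nvm].
  case: (x =P v) => [->|/eqP xv]; first by rewrite sr.
  have : x \in X :\ v by rewrite !inE xv.
  rewrite -uAB inE => /orP [xA|xB]; last exact: ne.
  move: xnM; rewrite inE xA /= negbK => rvx.
  apply/negP=> rmx; move/negP: nE; apply; apply/existsP; exists m; rewrite mM /=.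
  by apply/existsP; exists x; rewrite xA rvx sr.
Qed.

Lemma core1 (r : rel V) (v : V) (X A B : {set V}) : symmetric r -> v \in X ->
  A :|: B = X :\ v -> [disjoint A & B] -> A != set0 -> B != set0 ->
  (forall a b, a \in A -> b \in B -> ~~ r a b) ->
  (forall a, a \in A -> ~~ r v a) -> splitQ r X.
Proof.
move=> sr vX uAB dAB nA nB ne nv.
have vA : v \notin A.
  apply/negP=> vA; have : v \in X :\ v by rewrite -uAB inE vA.
  by rewrite !inE eqxx.
exists A, (v |: B); split => //.
- by rewrite setUCA uAB setD1K.
- rewrite -setI_eq0 in dAB; rewrite -setI_eq0 setIUr (eqP dAB) setU0.
  apply/eqP/setP=> x; rewrite !inE; apply/negP=> /andP [xA /eqP xv]; subst x.
  by rewrite xA in vA.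
- by apply/set0Pn; exists v; rewrite !inE eqxx.
- left=> a b aA; rewrite !inE => /orP [/eqP ->|bB]; first by rewrite sr nv.
  exact: ne.
Qed.

Lemma noedge_sym (r : rel V) (A B : {set V}) : symmetric r ->
  (forall a b, a \in A -> b \in B -> ~~ r a b) -> (forall a b, a \in B -> b \in A -> ~~ r a b).
Proof. by move=> sr ne a b aB bA; rewrite sr; apply: ne. Qed.

Lemma core (r : rel V) (v : V) (X A B : {set V}) : symmetric r -> cograph r -> v \in X ->
  A :|: B = X :\ v -> [disjoint A & B] -> A != set0 -> B != set0 ->
  (forall a b, a \in A -> b \in B -> ~~ r a b) -> splitQ r X.
Proof.
move=> sr P4 vX uAB dAB nA nB ne.
have uBA : B :|: A = X :\ v by rewrite setUC.
have dBA : [disjoint B & A] by rewrite disjoint_sym.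
have neBA := noedge_sym sr ne.
case: (boolP [forall a in A, ~~ r v a]) => [/forall_inP H|/forall_inPn [a0 aA rva]].
  exact: (core1 sr vX uAB dAB nA nB ne).
case: (boolP [forall b in B, ~~ r v b]) => [/forall_inP H|/forall_inPn [b0 bB rvb]].
  exact: (core1 sr vX uBA dBA nB nA neBA).
move: rva rvb; rewrite !negbK => rva rvb.
case: (boolP [forall y in X :\ v, r v y]) => [/forall_inP H|/forall_inPn [y yY nvy]].
  exists [set v], (X :\ v); split.
  - by rewrite setD1K.
  - by rewrite disjoints1 !inE eqxx.
  - by apply/set0Pn; exists v; rewrite inE.
  - by apply/set0Pn; exists a0; rewrite -uAB inE aA.
  - by right=> a b; rewrite inE => /eqP ->; apply: H.
move: yY; rewrite -uAB inE => /orP [yA|yB].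
  exact: (core2 sr P4 vX uAB dAB ne yA nvy bB rvb).
exact: (core2 sr P4 vX uBA dBA neBA yB nvy aA rva).
Qed.

Lemma decomp n : forall (r : rel V) (X : {set V}), #|X| = n.+2 -> symmetric r ->
  cograph r -> splitQ r X.
Proof.
elim: n => [|n IH] r X cX sr P4.
  have : X != set0 by rewrite -cards_eq0 cX.
  case/set0Pn=> v vX.
  have : #|X :\ v| == 1 by move: cX; rewrite (cardsD1 v X) vX add1n => -[] ->.
  case/cards1P=> y Ey.
  exists [set v], [set y]; split.
  - by rewrite -Ey setD1K.
  - have : y \in X :\ v by rewrite Ey inE.
    by rewrite !inE disjoints1 inE eq_sym => /andP [].
  - by apply/set0Pn; exists v; rewrite inE.
  - by apply/set0Pn; exists y; rewrite inE.
  - case: (boolP (r v y)) => rvy; [right|left] => a b; rewrite !inE => /eqP -> /eqP -> //.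
have : X != set0 by rewrite -cards_eq0 cX.
case/set0Pn=> v vX.
have cY : #|X :\ v| = n.+2 by move: cX; rewrite (cardsD1 v X) vX add1n => -[].
case: (IH r _ cY sr P4) => A [B [uAB dAB nA nB [ne|ae]]].
  exact: (core sr P4 vX uAB dAB nA nB ne).
apply: splitQ_crel.
apply: (core (crel_sym sr) (crel_P4 sr P4) vX uAB dAB nA nB).
move=> a b aA bB; rewrite /crel (disj_neq dAB aA bB) /= negbK.
exact: ae.
Qed.

End Decomp.

Section Game.
Variable V : finType.
Variable e : rel V.
Hypothesis sr : symmetric e.

Definition won (X S : {set V}) : bool := [exists x in X, (cnbh e x :&: X) \subset S].
Definition free (X D S : {set V}) (v : V) : bool := (v \in X) && (v \notin D :|: S).

Inductive StW (X : {set V}) : {set V} -> {set V} -> bool -> Prop :=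
| SW_won D S t : won X S -> StW X D S t
| SW_st D S v : free X D S v -> StW X D (v |: S) true -> StW X D S false
| SW_dom D S : (exists v, free X D S v) ->
    (forall v, free X D S v -> StW X (v |: D) S false) -> StW X D S true.

Lemma won_mono (X S S' : {set V}) : S \subset S' -> won X S -> won X S'.
Proof.
move=> sS /exists_inP [x xX sub]; apply/exists_inP; exists x => //.
exact: subset_trans sS.
Qed.

Lemma SW_nofree (X D S : {set V}) t : StW X D S t -> (forall v, ~~ free X D S v) -> won X S.
Proof.
case=> // [D' S' v fv _|D' S' [v fv] _] nf; by move: (nf v); rewrite fv.
Qed.

Lemma freeE (X D S : {set V}) v : free X D S v = [&& v \in X, v \notin D & v \notin S].
Proof. by rewrite /free inE negb_or. Qed.

Lemma M1 (X D S : {set V}) t : StW X D S t -> forall u, u \notin D -> StW X D (u |: S) t.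
Proof.
elim=> {D S t} [D S t W|D S v fv H IH|D S Ex H IH] u uD.
- by apply: SW_won; apply: won_mono W; apply: subsetUr.
- case: (v =P u) => [evu|/eqP nvu].
    subst v.
    case: (pickP (free X D (u |: S))) => [w fw|nf].
      apply: (SW_st fw); apply: IH.
      by move: fw; rewrite freeE => /and3P [].
    apply: SW_won; apply: (SW_nofree H) => w; rewrite nf //.
  apply: (SW_st (v := v)).
    by move: fv; rewrite !freeE !inE negb_or (negbTE nvu).
  by rewrite setUCA; apply: IH.
- case: (pickP (free X D (u |: S))) => [w fw|nf].
    apply: SW_dom; first by exists w.
    move=> v; rewrite !freeE !inE negb_or => /and4P [vX vD nvu vS].
    apply: IH; first by rewrite freeE vX vD vS.
    by rewrite !inE negb_or eq_sym nvu.
  apply: SW_won.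
  case: Ex => v fv.
  case: (v =P u) => [evu|/eqP nvu]; last first.
    move: (nf v); move: fv; rewrite !freeE !inE negb_or.
    by case/and3P=> -> -> ->; rewrite nvu.
  subst v.
  apply: won_mono (subsetUr _ _) _.
  apply: (SW_nofree (H u fv)) => w; move: (nf w).
  by rewrite !freeE !inE !negb_or; case: (w \in X); case: (w == u); case: (w \in D); case: (w \in S).
Qed.

Lemma M2 (X D S : {set V}) : StW X D S true -> StW X D S false.
Proof.
move=> H; case: (pickP (free X D S)) => [w fw|nf].
  apply: (SW_st fw); apply: M1 => //.
  by move: fw; rewrite freeE => /and3P [].
by apply: SW_won; apply: (SW_nofree H) => w; rewrite nf.
Qed.

Lemma IR (X D S : {set V}) t : StW X D S t -> forall v, v \notin X -> StW X (v |: D) S t.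
Proof.
have fr : forall v w (D S : {set V}), v \notin X -> free X D S w -> free X (v |: D) S w.
  move=> v w D' S' vX; rewrite !freeE !inE negb_or => /and3P [wX wD wS].
  rewrite wX wD wS /= !andbT; apply/eqP=> ewv; subst w; by rewrite wX in vX.
elim=> {D S t} [D S t W|D S w fw H IH|D S Ex H IH] v vX.
- exact: SW_won.
- apply: (SW_st (v := w)); last exact: IH.
  exact: fr.
- apply: SW_dom; first by case: Ex => w fw; exists w; apply: fr.
  move=> w; rewrite !freeE !inE !negb_or => /and3P [wX /andP [_ wD] wS].
  rewrite setUCA; apply: IH => //.
  by rewrite freeE wX wD wS.
Qed.

Definition nfree (X D S : {set V}) := #|[set v | free X D S v]|.

Lemma nfree_D (X D S : {set V}) v : free X D S v -> nfree X (v |: D) S < nfree X D S.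
Proof.
move=> fv; apply: proper_card; apply/properP; split.
  apply/subsetP=> w; rewrite !inE !freeE !inE negb_or.
  by case/and3P=> -> /andP [_ ->] ->.
by exists v; rewrite !inE // !freeE !inE eqxx /= ?andbF.
Qed.

Lemma nfree_S (X D S : {set V}) v : free X D S v -> nfree X D (v |: S) < nfree X D S.
Proof.
move=> fv; apply: proper_card; apply/properP; split.
  apply/subsetP=> w; rewrite !inE !freeE !inE negb_or.
  by case/and3P=> -> -> /andP [_ ->].
by exists v; rewrite !inE // !freeE !inE eqxx /= ?andbF.
Qed.

Lemma C1 (A X : {set V}) : A \subset X -> (forall S : {set V}, won A S -> won X S) ->
  forall D S t, StW A D S t -> StW X D S t.
Proof.
move=> AX wAX D S t H.
suff: forall n D S t, nfree X D S < n -> StW A D S t -> StW X D S t.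
  by move/(_ (nfree X D S).+1 D S t (ltnSn _) H).
elim=> [|n IH] {H}D {}S {}t Hn H //.
case: H Hn => [D' S' t' W|D' S' v fv H|D' S' Ex H] Hn.
- by apply: SW_won; apply: wAX.
- have fX : free X D' S' v by move: fv; rewrite !freeE => /and3P [vA -> ->]; rewrite (subsetP AX).
  apply: (SW_st fX); apply: IH H.
  exact: leq_trans (nfree_S fX) Hn.
- have fX : forall v, free A D' S' v -> free X D' S' v.
    by move=> v; rewrite !freeE => /and3P [vA -> ->]; rewrite (subsetP AX).
  apply: SW_dom; first by case: Ex => v fv; exists v; apply: fX.
  move=> v fv; apply: IH; first exact: leq_trans (nfree_D fv) Hn.
  case: (boolP (v \in A)) => vA.
    apply: H; move: fv; rewrite !freeE => /and3P [_ -> ->]; by rewrite vA.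
  by apply: M2; apply: IR vA; apply: SW_dom.
Qed.

Lemma C2 (A B X : {set V}) : A \subset X -> B \subset X -> [disjoint A & B] ->
  (forall S : {set V}, won A S -> won X S) -> (forall S : {set V}, won B S -> won X S) ->
  forall D S, (exists v, free X D S v) -> StW A D S false -> StW B D S false -> StW X D S true.
Proof.
move=> AX BX dAB wA wB D S Ex HA HB.
apply: SW_dom => // v fv.
case: (boolP (v \in A)) => vA.
  have vB : v \notin B.
    by apply/negP=> vB; move: dAB; rewrite -setI_eq0 => /eqP /setP /(_ v); rewrite !inE vA vB.
  by apply: (C1 BX wB); apply: IR.
by apply: (C1 AX wA); apply: IR.
Qed.

Lemma liftJ (B X : {set V}) w : X = w |: B -> (forall S : {set V}, w \in S -> won B S -> won X S) ->
  forall D S t, StW B D S t -> w \in S -> StW X D S t.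
Proof.
move=> EX wBX D S t; subst X; elim=> {D S t} [D S t W|D S v fv H IH|D S Ex H IH] wS.
- exact: SW_won (wBX _ wS W).
- apply: (SW_st (v := v)); last by apply: IH; rewrite !inE wS orbT.
  by move: fv; rewrite !freeE !inE => /and3P [-> -> ->]; rewrite orbT.
- apply: SW_dom.
    case: Ex => v; rewrite !freeE => /and3P [vB vD vS]; exists v.
    by rewrite freeE !inE vB vD vS orbT.
  move=> v; rewrite freeE => /and3P [vX vD vS]; move: vX; rewrite !inE => /orP [/eqP evw|vB].
    by subst v; rewrite wS in vS.
  by apply: (IH v) => //; rewrite freeE vB vD vS.
Qed.

Lemma invT (X D S : {set V}) t : StW X D S t -> t = true ->
  won X S \/ (forall v, free X D S v -> StW X (v |: D) S false).
Proof. by case=> [D' S' t' W|D' S' v fv H|D' S' Ex H] // _; [left|right]. Qed.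

Lemma invF (X D S : {set V}) t : StW X D S t -> t = false ->
  won X S \/ (exists2 v, free X D S v & StW X D (v |: S) true).
Proof. by case=> [D' S' t' W|D' S' v fv H|D' S' Ex H] // _; [left|right; exists v]. Qed.

Lemma cnbh_sym x y : (x \in cnbh e y) = (y \in cnbh e x).
Proof. by rewrite /cnbh !inE eq_sym sr. Qed.

Lemma disjP' (D S : {set V}) x : [disjoint D & S] -> x \in D -> x \in S -> False.
Proof.
by move=> dDS xD xS; move: dDS; rewrite -setI_eq0 => /eqP /setP /(_ x); rewrite !inE xD xS.
Qed.

Lemma link (D S : {set V}) t : DomWins e D S t -> [disjoint D & S] -> StW setT D S t -> False.
Proof.
elim=> {D S t} [D S t full dom|D S v vf H IH|D S nfull H IH] dDS HS.
- have W : won setT S by apply: (SW_nofree HS) => w; rewrite /free full !inE.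
  case/exists_inP: W => x _ sub.
  move/forallP: dom => /(_ x) /exists_inP [y yD xy].
  apply: (disjP' dDS yD); apply: (subsetP sub).
  by rewrite inE in_setT andbT -cnbh_sym.
- have dvD : [disjoint v |: D & S].
    rewrite -setI_eq0 in dDS; rewrite -setI_eq0 setIUl (eqP dDS) setU0.
    apply/eqP/setP=> x; rewrite !inE; apply/negP=> /andP [/eqP -> vS].
    by move: vf; rewrite !inE vS orbT.
  apply: (IH dvD).
  case: (invT HS erefl) => [W|Hd]; first exact: SW_won.
  by apply: Hd; rewrite freeE inE -negb_or -in_setU.
- case: (invF HS erefl) => [W|[v fv Hv]].
    have : exists v, v \notin D :|: S.
      apply/existsP; rewrite -negb_forall; apply: contra nfull => /forallP al.
      by apply/eqP/setP=> x; rewrite in_setT al.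
    case=> v vf; apply: (IH v vf).
      rewrite -setI_eq0 in dDS; rewrite -setI_eq0 setIUr (eqP dDS) setU0.
      apply/eqP/setP=> x; rewrite !inE; apply/negP=> /andP [xD /eqP xv]; subst x.
      by move: vf; rewrite !inE xD.
    by apply: SW_won; apply: won_mono W; apply: subsetUr.
  have vf : v \notin D :|: S by move: fv; rewrite freeE inE -negb_or -in_setU.
  apply: (IH v vf) => //.
  rewrite -setI_eq0 in dDS; rewrite -setI_eq0 setIUr (eqP dDS) setU0.
  apply/eqP/setP=> x; rewrite !inE; apply/negP=> /andP [xD /eqP xv]; subst x.
  by move: vf; rewrite !inE xD.
Qed.

End Game.

Section Pairing.
Variable V : finType.
Variable e : rel V.

Definition pflat (s : seq (V * V)) := flatten [seq [:: p.1; p.2] | p <- s].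

Lemma memF (s : seq (V * V)) q x : q \in s -> x \in [:: q.1; q.2] -> x \in pflat s.
Proof.
elim: s => // a s IH qas xq; move: qas; rewrite inE => /orP [/eqP Eq|qs];
  [subst q|];
  have -> : pflat (a :: s) = [:: a.1; a.2] ++ pflat s by [].
  by rewrite mem_cat xq.
by rewrite mem_cat (IH qs xq) orbT.
Qed.

Lemma pair_uniq (s : seq (V * V)) : uniq (pflat s) -> forall p q v, p \in s -> q \in s ->
  v \in [:: p.1; p.2] -> v \in [:: q.1; q.2] -> p = q.
Proof.
elim: s => // a s IH.
have -> : pflat (a :: s) = [:: a.1; a.2] ++ pflat s by [].
rewrite cat_uniq => /and3P [_ nh us] p q v.
have nin : forall r, r \in s -> v \in [:: r.1; r.2] -> v \in [:: a.1; a.2] -> False.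
  move=> r rs vr va; move/hasPn: nh => /(_ v (memF rs vr)).
  by rewrite /= va.
move=> ps' qs' vp vq; move: ps' qs'.
rewrite !inE => /orP [/eqP Ep|ps] /orP [/eqP Eq|qs]; subst; rewrite //.
- by case: (nin _ qs vq vp).
- by case: (nin _ ps vp vq).
- exact: (IH us p q v ps qs vp vq).
Qed.

Lemma pair_neq (s : seq (V * V)) : uniq (pflat s) -> forall p, p \in s -> p.1 != p.2.
Proof.
elim: s => // a s IH.
have -> : pflat (a :: s) = [:: a.1; a.2] ++ pflat s by [].
rewrite cat_uniq => /and3P [ua _ us] p; rewrite inE => /orP [/eqP ->|ps].
  by move: ua; rewrite /= inE andbT.
exact: IH.
Qed.

Variable P : seq (V * V).
Hypothesis Pu : uniq (pflat P).
Hypothesis Pc : forall x, exists2 p, p \in P & (x \in cnbh e p.1) && (x \in cnbh e p.2).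

Definition okp (D S : {set V}) (p : V * V) :=
  (p.1 \in D) || (p.2 \in D) || ((p.1 \notin S) && (p.2 \notin S)).
Definition InvF D S := forall p, p \in P -> okp D S p.
Definition InvT D S := InvF D S \/
  exists2 u, u \notin D :|: S & forall p, p \in P -> okp D S p || ((p.1 == u) || (p.2 == u)).

Lemma okp_mono (D S : {set V}) u p : okp D S p -> okp (u |: D) S p.
Proof. by rewrite /okp !inE => /orP [/orP [->|->]|->]; rewrite ?orbT. Qed.

Lemma dom_end (D S : {set V}) : D :|: S = setT -> InvF D S -> dominating e D.
Proof.
move=> full inv; apply/forallP=> x; case: (Pc x) => p pP /andP [x1 x2].
have := inv p pP; rewrite /okp => /orP [/orP [p1D|p2D]| /andP [n1 n2]].
- by apply/exists_inP; exists p.1.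
- by apply/exists_inP; exists p.2.
have : p.1 \in D :|: S by rewrite full inE.
by rewrite inE (negbTE n1) orbF => p1D; apply/exists_inP; exists p.1.
Qed.

Lemma meas (A : {set V}) v : v \notin A -> #|~: (v |: A)| < #|~: A|.
Proof.
move=> vA; apply: proper_card; apply/properP; split.
  by apply/subsetP=> w; rewrite !inE negb_or => /andP [_ ->].
by exists v; rewrite !inE ?vA // eqxx.
Qed.

Lemma strat n : forall D S : {set V}, #|~: (D :|: S)| < n ->
  (InvF D S -> DomWins e D S false) /\ (InvT D S -> DomWins e D S true).
Proof.
elim: n => [|n IH] D S Hn //; split.
- move=> inv; case: (boolP (D :|: S == setT)) => [/eqP full|nfull].
    apply: DW_end; first exact: full. exact: (dom_end full inv).
  apply: DW_stall => // v vf.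
  have Hm : #|~: (D :|: (v |: S))| < n.
    by rewrite setUCA; apply: leq_trans (meas vf) _.
  apply: (IH _ _ Hm).2.
  have same : forall p, ~~ ((p.1 == v) || (p.2 == v)) -> okp D (v |: S) p = okp D S p.
    by move=> p; rewrite negb_or /okp !inE => /andP [/negbTE -> /negbTE ->].
  case: (pickP (fun p => (p \in P) && ((p.1 == v) || (p.2 == v)))) => [p0 /andP [p0P hv]|none].
    case: (boolP (okp D (v |: S) p0)) => ok0.
      left=> p pP; case: (boolP ((p.1 == v) || (p.2 == v))) => hp.
        have -> // : p = p0.
        apply: (pair_uniq Pu pP p0P (v := v)).
          by move: hp; rewrite !inE => /orP [/eqP ->|/eqP ->]; rewrite eqxx ?orbT.
        by move: hv; rewrite !inE => /orP [/eqP ->|/eqP ->]; rewrite eqxx ?orbT.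
      by rewrite same // inv.
    right; exists (if p0.1 == v then p0.2 else p0.1).
      move: ok0 (inv p0 p0P); rewrite /okp !inE !negb_or.
      case/andP=> /andP [n1 n2] h3 /orP [/orP [h|h]|h]; first by rewrite h in n1.
        by rewrite h in n2.
      case/andP: h => m1 m2.
      have neq := pair_neq Pu p0P.
      case E: (p0.1 == v); rewrite ?n1 ?n2 ?m1 ?m2 ?E //=.
      by move/eqP: E => <-; rewrite andbT eq_sym.
    move=> p pP; case: (boolP ((p.1 == v) || (p.2 == v))) => hp.
      have -> : p = p0.
        apply: (pair_uniq Pu pP p0P (v := v)).
          by move: hp; rewrite !inE => /orP [/eqP ->|/eqP ->]; rewrite eqxx ?orbT.
        by move: hv; rewrite !inE => /orP [/eqP ->|/eqP ->]; rewrite eqxx ?orbT.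
      by case: (p0.1 == v); rewrite eqxx ?orbT.
    by rewrite same // inv.
  left=> p pP; rewrite same ?inv //.
  by move: (none p); rewrite pP /= => ->.
- move=> inv; case: (boolP (D :|: S == setT)) => [/eqP full|nfull].
    apply: DW_end => //; apply: (dom_end full).
    case: inv => [h|[u uf _]]; first exact: h. by rewrite full inE in uf.
  case: inv => [inv|[u uf hu]].
    have : exists v, v \notin D :|: S.
      apply/existsP; rewrite -negb_forall; apply: contra nfull => /forallP al.
      by apply/eqP/setP=> x; rewrite in_setT al.
    case=> v vf; apply: (DW_dom (v := v)) => //.
    apply: (IH _ _ _).1.
      by rewrite -setUA; apply: leq_trans (meas vf) _.
    by move=> p pP; apply: okp_mono; apply: inv.
  apply: (DW_dom (v := u)) => //.
  apply: (IH _ _ _).1.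
    by rewrite -setUA; apply: leq_trans (meas uf) _.
  move=> p pP; case/orP: (hu p pP) => [h|]; first exact: okp_mono.
  by rewrite /okp !inE => /orP [/eqP ->|/eqP ->]; rewrite eqxx ?orbT.
Qed.

Lemma pairing_wins : DomWins e set0 set0 true /\ DomWins e set0 set0 false.
Proof.
have inv : InvF set0 set0 by move=> p _; rewrite /okp !inE.
have := strat (n := #|~: (set0 :|: (set0 : {set V}))|.+1) (ltnSn _).
by case=> h1 h2; split; [apply: h2; left|apply: h1].
Qed.

End Pairing.

Section Main.
Variable V : finType.
Variable e : rel V.
Hypothesis sr : symmetric e.
Hypothesis P4 : cograph e.

Definition vy (y : option V) : seq V := if y is Some y then [:: y] else [::].
Definition verts (P : seq (V * V)) y := vy y ++ pflat P.
Definition covers (P : seq (V * V)) y x : bool :=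
  has (fun p => (x \in cnbh e p.1) && (x \in cnbh e p.2)) P ||
  (if y is Some y then x \in cnbh e y else false).
Definition PDSX (X : {set V}) P y :=
  [/\ uniq (verts P y), {subset verts P y <= X} & forall x, x \in X -> covers P y x].
Definition P0 X := exists P, PDSX X P None.
Definition P1 X := exists P y, PDSX X P y.

Lemma P0_P1 X : P0 X -> P1 X.
Proof. by case=> P H; exists P, None. Qed.

Lemma cnbh_self x : x \in cnbh e x.
Proof. by rewrite !inE eqxx. Qed.

Lemma cnbh_e x y : e y x -> x \in cnbh e y.
Proof. by rewrite !inE => ->; rewrite orbT. Qed.

Lemma pflat_cat (s1 s2 : seq (V * V)) : pflat (s1 ++ s2) = pflat s1 ++ pflat s2.
Proof. by rewrite /pflat map_cat flatten_cat. Qed.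

Lemma disjP2 (A B : {set V}) x : [disjoint A & B] -> x \in A -> x \in B -> False.
Proof.
by move=> dAB xA xB; move: dAB; rewrite -setI_eq0 => /eqP /setP /(_ x); rewrite !inE xA xB.
Qed.

Lemma union_pds (A B : {set V}) PA y PB : [disjoint A & B] ->
  PDSX A PA y -> PDSX B PB None -> PDSX (A :|: B) (PA ++ PB) y.
Proof.
move=> dAB [uA sA cA] [uB sB cB].
have Ev : verts (PA ++ PB) y = verts PA y ++ pflat PB by rewrite /verts pflat_cat catA.
split; rewrite ?Ev.
- rewrite cat_uniq uA uB andbT /=; apply/hasPn=> x xB; apply/negP=> xA.
  exact: (disjP2 dAB (sA _ xA) (sB _ xB)).
- by move=> x; rewrite mem_cat inE => /orP [/sA ->|/sB ->]; rewrite ?orbT.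
- move=> x; rewrite inE => /orP [/cA|/cB]; rewrite /covers has_cat.
    by case/orP=> ->; rewrite ?orbT.
  by rewrite orbF => ->; rewrite orbT.
Qed.

Lemma join22 (A B : {set V}) : [disjoint A & B] -> 1 < #|A| -> 1 < #|B| ->
  (forall a b, a \in A -> b \in B -> e a b) -> P0 (A :|: B).
Proof.
move=> dAB /card_gt1P [a1 [a2 [a1A a2A na]]] /card_gt1P [b1 [b2 [b1B b2B nb]]] ae.
exists [:: (a1, a2); (b1, b2)]; split.
- rewrite /verts /pflat /= !inE !negb_or na nb /= andbT.
  have nab : forall a b, a \in A -> b \in B -> a != b.
    by move=> a b aA bB; apply/eqP=> eab; subst; apply: (disjP2 dAB aA bB).
  by rewrite !nab.
- by move=> x; rewrite /verts /pflat /= !inE => /or4P [] /eqP ->; rewrite ?a1A ?a2A ?b1B ?b2B ?orbT.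
- move=> x; rewrite inE => /orP [xA|xB]; rewrite /covers /= orbF.
    have h1 : x \in cnbh e b1 by apply: cnbh_e; rewrite sr ae.
    have h2 : x \in cnbh e b2 by apply: cnbh_e; rewrite sr ae.
    by rewrite h1 h2 orbT.
  have h1 : x \in cnbh e a1 by apply: cnbh_e; rewrite ae.
  have h2 : x \in cnbh e a2 by apply: cnbh_e; rewrite ae.
  by rewrite h1 h2.
Qed.

Lemma joinW1 (B : {set V}) w : w \notin B -> (forall b, b \in B -> e w b) -> P1 (w |: B).
Proof.
move=> wB ae; exists [::], (Some w); split => //.
- by move=> x; rewrite /verts /= inE => /eqP ->; rewrite !inE eqxx.
- move=> x; rewrite !inE => /orP [/eqP ->|xB]; rewrite /covers /=; first exact: cnbh_self.
  exact: cnbh_e (ae _ xB).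
Qed.

Lemma joinW0 (B : {set V}) w : w \notin B -> B != set0 -> (forall b, b \in B -> e w b) ->
  P1 B -> P0 (w |: B).
Proof.
move=> wB nB ae [PB [[y|] [uB sB cB]]].
  exists ((w, y) :: PB); split.
  - move: uB; rewrite /verts /= => /andP [yP uP]; rewrite uP yP andbT !inE negb_or.
    have yB : y \in B by apply: sB; rewrite /verts inE eqxx.
    have -> /= : w != y by apply/eqP=> ewy; subst; rewrite yB in wB.
    rewrite ?andbT; apply/negP=> wP; move/negP: wB; apply; apply: sB.
    by rewrite /verts /= inE wP orbT.
  - move=> x; rewrite /verts /= !inE => /or3P [/eqP ->|/eqP ->|xP].
    + by rewrite eqxx.
    + by rewrite (sB y) ?orbT // /verts inE eqxx.
    + by rewrite (sB x) ?orbT // /verts /= inE xP orbT.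
  - move=> x; rewrite !inE => /orP [/eqP ->|xB].
      have yB : y \in B by apply: sB; rewrite /verts inE eqxx.
      by rewrite /covers /= cnbh_self cnbh_e // sr ae.
    move: (cB x xB); rewrite /covers /= => /orP [->|xy]; first by rewrite !orbT.
    by rewrite xy cnbh_e ?ae.
exists PB; split => //.
- by move=> x /sB xB; rewrite !inE xB orbT.
- case/set0Pn: nB => b bB.
  move=> x; rewrite !inE => /orP [/eqP ->|xB]; last exact: cB.
  move: (cB b bB); rewrite /covers orbF => /hasP [p pP _].
  apply/orP; left; apply/hasP; exists p => //.
  have p1 : p.1 \in B by apply: sB; rewrite /verts /= (memF pP) // inE eqxx.
  have p2 : p.2 \in B by apply: sB; rewrite /verts /= (memF pP) // !inE eqxx orbT.
  by rewrite !cnbh_e // sr ae.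
Qed.

End Main.

Section Main2.
Variable V : finType.
Variable e : rel V.
Hypothesis sr : symmetric e.
Hypothesis P4 : cograph e.

Definition Res (X : {set V}) :=
  (P0 e X \/ StW e X set0 set0 false) /\ (P1 e X \/ StW e X set0 set0 true).

Lemma won_union (A B S : {set V}) : (forall a b, a \in A -> b \in B -> ~~ e a b) ->
  won e A S -> won e (A :|: B) S.
Proof.
move=> ne /exists_inP [x xA sub]; apply/exists_inP; exists x; first by rewrite inE xA.
apply/subsetP=> y; rewrite inE => /andP [yN yX]; apply: (subsetP sub).
rewrite inE yN /=; move: yX; rewrite inE => /orP [//|yB].
move: yN; rewrite !inE => /orP [/eqP ->//|exy].
by move: (ne x y xA yB); rewrite exy.
Qed.

Lemma won_join (B S : {set V}) w : w \in S -> won e B S -> won e (w |: B) S.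
Proof.
move=> wS /exists_inP [x xB sub]; apply/exists_inP; exists x; first by rewrite !inE xB orbT.
apply/subsetP=> y; rewrite inE => /andP [yN]; rewrite !inE => /orP [/eqP ->//|yB].
by apply: (subsetP sub); rewrite inE yN yB.
Qed.

Lemma joinW (B : {set V}) w : w \notin B -> B != set0 -> (forall b, b \in B -> e w b) ->
  (P1 e B \/ StW e B set0 set0 true) -> Res (w |: B).
Proof.
move=> wB nB ae IHB; split; last by left; apply: joinW1.
case: IHB => [p1|s2]; first by left; apply: joinW0.
right; apply: (SW_st (v := w)); first by rewrite /free !inE eqxx.
apply: (liftJ (B := B) (X := w |: B) (w := w) erefl).
- by move=> S wS W; apply: won_join.
- by apply: (M1 s2); rewrite inE.
- exact: setU11.
Qed.

Lemma unionR (A B : {set V}) : [disjoint A & B] -> A != set0 ->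
  (forall a b, a \in A -> b \in B -> ~~ e a b) -> Res A -> Res B -> Res (A :|: B).
Proof.
move=> dAB nA ne [IA1 IA2] [IB1 IB2].
have AX : A \subset A :|: B by apply: subsetUl.
have BX : B \subset A :|: B by apply: subsetUr.
have wA : forall S : {set V}, won e A S -> won e (A :|: B) S by move=> S; apply: won_union.
have wB : forall S : {set V}, won e B S -> won e (A :|: B) S.
  move=> S W; rewrite setUC; apply: won_union W => a b aB bA.
  by rewrite sr; apply: ne.
split.
  case: IA1 => [[PA hA]|sA]; last by right; apply: (C1 AX wA).
  case: IB1 => [[PB hB]|sB]; last by right; apply: (C1 BX wB).
  by left; exists (PA ++ PB); apply: union_pds.
have ExF : exists v, free (A :|: B) set0 set0 v.
  by case/set0Pn: nA => a aA; exists a; rewrite /free !inE aA.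
case: IA1 => [[PA hA]|s1A].
  case: IB2 => [[PB [y hB]]|s2B]; last by right; apply: (C1 BX wB).
  left; exists (PB ++ PA), y; rewrite setUC; apply: union_pds => //.
  by rewrite disjoint_sym.
case: IB1 => [[PB hB]|s1B].
  case: IA2 => [[PA [y hA]]|s2A]; last by right; apply: (C1 AX wA).
  by left; exists (PA ++ PB), y; apply: union_pds.
by right; apply: (C2 AX BX dAB wA wB ExF s1A s1B).
Qed.

Lemma set1_of (A : {set V}) : A != set0 -> #|A| <= 1 -> exists w, A = [set w].
Proof.
move=> nA c1; apply/cards1P; rewrite eqn_leq c1 /= card_gt0 //.
Qed.

Lemma main n : forall X : {set V}, #|X| < n -> Res X.
Proof.
elim: n => // n IH X Hn.
case: (ltnP 1 #|X|) => [c2|c1]; last first.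
  case: (posnP #|X|) => [c0|cp].
    have -> : X = set0 by apply: cards0_eq.
    split; left; last apply: P0_P1; exists [::]; split => // x; by rewrite inE.
  have : #|X| == 1 by rewrite eqn_leq c1 cp.
  case/cards1P => x ->; split.
    right; apply: (SW_st (v := x)); first by rewrite /free !inE eqxx.
    apply: SW_won; apply/exists_inP; exists x; rewrite ?inE //.
    by rewrite setU0 subsetIr.
  left; exists [::], (Some x); split => //.
    by move=> y; rewrite /verts inE => /eqP ->; rewrite inE.
  by move=> y; rewrite inE => /eqP ->; rewrite /covers /= cnbh_self.
have [m Em] : exists m, #|X| = m.+2.
  by exists #|X|.-2; move: c2; case: #|X| => [|[|k]].
case: (decomp Em sr P4) => A [B [uAB dAB nA nB H]]; subst X.
have cAB : #|A :|: B| = #|A| + #|B|.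
  by rewrite -(cardsUI A B); move: dAB; rewrite -setI_eq0 => /eqP ->; rewrite cards0 addn0.
have IHA : Res A.
  have := Hn; rewrite ltnS cAB => h; apply: IH; apply: leq_trans h.
  by rewrite -addn1 leq_add2l card_gt0.
have IHB : Res B.
  have := Hn; rewrite ltnS cAB => h; apply: IH; apply: leq_trans h.
  by rewrite -add1n leq_add2r card_gt0.
case: H => [ne|ae].
  exact: unionR.
case: (ltnP 1 #|A|) => ha; case: (ltnP 1 #|B|) => hb.
- by have p0 := join22 sr dAB ha hb ae; split; left => //; apply: P0_P1.
- case: (set1_of nB hb) => w Ew; subst B.
  rewrite setUC; apply: joinW.
  + by apply/negP=> wA; apply: (disjP2 dAB wA); rewrite inE.
  + by [].
  + by move=> a aA; rewrite sr; apply: ae; rewrite ?inE.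
  + by case: IHA.
- case: (set1_of nA ha) => w Ew; subst A.
  apply: joinW.
  + by apply/negP=> wB; apply: (disjP2 dAB _ wB); rewrite inE.
  + by [].
  + by move=> b bB; apply: ae; rewrite ?inE.
  + by case: IHB.
- case: (set1_of nA ha) => w Ew; subst A.
  apply: joinW.
  + by apply/negP=> wB; apply: (disjP2 dAB _ wB); rewrite inE.
  + by [].
  + by move=> b bB; apply: ae; rewrite ?inE.
  + by case: IHB.
Qed.

End Main2.

Theorem theorem6 (V : finType) (e : rel V) :
  symmetric e -> irreflexive e -> cograph e ->
  (outcome_D e <-> admits_pairing_dominating_set e).
Proof.
move=> sr irr P4; split.
- case=> _ Hf.
  have [[[P [uP _ cP]]|s1] _] := main sr P4 (ltnSn #|[set: V]|).
    exists P; split; first exact: uP.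
    move=> x; have := cP x (in_setT x); rewrite /covers orbF => /hasP [p pP hp].
    by exists p.
  exfalso; apply: (link sr Hf _ s1).
  by rewrite -setI_eq0 set0I.
- case=> P [uP cP]; have [h1 h2] := pairing_wins uP cP.
  by split.
Qed.
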